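(* If $G$ is a connected graph that is not a path, then the detour sequence of $G$ has a repetition of length at least three; that is, some value occurs at least three times in the detour sequence of $G$.
   Context: All graphs are finite and simple. The order of a path is its number of vertices. For a vertex $v$ of $G$, $\tau(v)$ is the order of a longest path in $G$ having $v$ as an endvertex. The detour sequence of $G$ is the nondecreasing sequence of the values $\tau(v)$, $v\in V(G)$ (one term per vertex). A repetition is a maximal block of at least two consecutive equal terms of the sequence; its length is the number of terms in the block. *)

(* Defs.v *)
From mathcomp Require Import all_boot.
Set Implicit Arguments. Unset Strict Implicit. Unset Printing Implicit Defensive.

Definition simple_graph (T : finType) (e : rel T) : Prop :=
  symmetric e /\ irreflexive e.

Definition connected_graph (T : finType) (e : rel T) : Prop :=
  0 < #|T| /\ forall x y : T, connect e x y.

Definition is_path_graph (T : finType) (e : rel T) : Prop :=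
  exists s : seq T, [/\ uniq s, (forall x, x \in s) &
    forall x y, e x y = (index y s == (index x s).+1) || (index x s == (index y s).+1)].

(* A path of order n.+1 starting at v: v :: t with t : n.-tuple T,
   all vertices distinct and consecutive vertices adjacent. *)
Definition has_path_from (T : finType) (e : rel T) (v : T) (n : nat) : bool :=
  [exists t : n.-tuple T, uniq (v :: t) && path e v t].

(* tau v = order of a longest path with v as an endvertex (orders are <= #|T|). *)
Definition tau (T : finType) (e : rel T) (v : T) : nat :=
  \max_(n < #|T| | has_path_from e v n) n.+1.

(* Main.v *)
Require Import Defs.
From mathcomp Require Import all_boot.
From mathcomp Require Import zify.
From Stdlib Require Import Classical.

Section S.
Variables (T : finType) (e : rel T).
Hypothesis sym : symmetric e.
Hypothesis irr : irreflexive e.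

Lemma tau_ge v s : uniq (v :: s) -> path e v s -> (size s).+1 <= tau e v.
Proof.
move=> hu hp.
have hs : size s < #|T|.
  by have := max_card (mem (v :: s)); rewrite (card_uniqP hu).
rewrite /tau.
apply: (@leq_bigmax_cond _ (fun n : 'I_#|T| => has_path_from e v n)
          (fun n : 'I_#|T| => n.+1) (Ordinal hs)).
by apply/existsP; exists (in_tuple s); apply/andP.
Qed.

Lemma tau_path v : exists s, [/\ uniq (v :: s), path e v s & (size s).+1 = tau e v].
Proof.
have h0 : 0 < #|T| by apply/card_gt0P; exists v.
rewrite /tau (bigmax_eq_arg (Ordinal h0)); last first.
  by apply/existsP; exists [tuple].
case: arg_maxnP.
  by apply/existsP; exists [tuple].
move=> i /existsP [t /andP [hu hp]] _.
by exists t; split => //; rewrite size_tuple.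
Qed.

Lemma rev_ok s : uniq s -> sorted e s -> uniq (rev s) && sorted e (rev s).
Proof.
move=> hu hs; rewrite rev_uniq hu rev_sorted /=.
by apply: (sub_sorted _ hs) => x y; rewrite /= sym.
Qed.

Section C.
Variables (x0 : T) (L : nat) (Q : seq T).
Hypotheses (hQu : uniq Q) (hQs : sorted e Q) (hQL : size Q = L).
Hypothesis htau : forall v, tau e v <= L.
Hypothesis hfib : forall k, #|[set v | tau e v == k]| <= 2.

Lemma count_ge d : #|[set v | L + 1 - d <= tau e v]| <= 2 * d.
Proof.
elim: d => [|d IH].
  rewrite (_ : [set v | _] = set0) ?cards0 //.
  apply/setP => v; rewrite in_set in_set0; apply/negbTE; rewrite -ltnNge.
  by have := htau v; lia.
apply: leq_trans (subset_leq_card (_ : _ \subset [set v | tau e v == L - d] :|: [set v | L + 1 - d <= tau e v])) _.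
  by apply/subsetP => v; rewrite !inE; lia.
have := cardsUI [set v | tau e v == L - d] [set v | L + 1 - d <= tau e v].
have := hfib (L - d); lia.
Qed.

Lemma take_nthP h x : x \in take h Q -> exists2 r, (r < h) && (r < L) & x = nth x0 Q r.
Proof.
move=> hx; exists (index x (take h Q)).
  have := hx; rewrite -index_mem size_take; case: ifP => H1 H2; apply/andP; split; move: H1 H2; rewrite ?hQL; lia.
have hr : index x (take h Q) < size (take h Q) by rewrite index_mem.
rewrite -(@nth_take h _ x0 _ _ Q) ?nth_index //.
by move: hr; rewrite size_take; case: ifP => H1 H2; move: H1 H2; rewrite ?hQL; lia.
Qed.

Lemma drop_nthP m x : x \in drop m Q -> exists2 r, (m <= r) && (r < L) & x = nth x0 Q r.
Proof.
move=> hx; exists (m + index x (drop m Q)).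
  by have := hx; rewrite -index_mem size_drop hQL => H; apply/andP; split; lia.
by rewrite -nth_drop nth_index.
Qed.

Lemma fwd r : r < L -> L - r <= tau e (nth x0 Q r).
Proof.
move=> hr.
have hu := drop_uniq r hQu; have hs := drop_sorted r hQs.
rewrite (drop_nth x0) ?hQL // in hu hs.
by have := tau_ge _ _ hu hs; rewrite size_drop hQL; lia.
Qed.

Lemma bwd r : r < L -> r.+1 <= tau e (nth x0 Q r).
Proof.
move=> hr.
have /andP [hu hs] := rev_ok _ (take_uniq r.+1 hQu) (take_sorted r.+1 hQs).
rewrite (take_nth x0) ?hQL // rev_rcons in hu hs.
by have := tau_ge _ _ hu hs; rewrite size_rev size_takel // hQL; lia.
Qed.

Lemma contraA h w : 2 * h <= L -> w \notin take h Q ++ drop (L - h) Q ->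
  L + 1 - h <= tau e w -> False.
Proof.
move=> h2 hw htw.
set A := take h Q ++ drop (L - h) Q.
have huA : uniq A.
  apply: subseq_uniq hQu.
  rewrite /A -[X in subseq _ X](cat_take_drop h Q); apply: cat_subseq => //.
  rewrite (_ : L - h = (L - h - h) + h); last by lia.
  by rewrite -drop_drop drop_subseq.
have hsz : size A = 2 * h.
  by rewrite size_cat size_takel ?size_drop hQL; lia.
have : size (w :: A) <= size (enum [set v | L + 1 - h <= tau e v]).
  apply: uniq_leq_size; first by rewrite /= hw huA.
  move=> x; rewrite inE mem_enum in_set => /predU1P [-> // | ].
  rewrite mem_cat => /orP [/take_nthP [r /andP [hr1 hr2] ->] | /drop_nthP [r /andP [hr1 hr2] ->]].
    by have := fwd _ hr2; lia.
  by have := bwd _ hr2; lia.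
rewrite -cardE /= hsz; have := count_ge h; lia.
Qed.

Lemma notinA q h : h <= q -> q < L - h -> nth x0 Q q \notin take h Q ++ drop (L - h) Q.
Proof.
move=> h1 h2; apply/negP; rewrite mem_cat => /orP [/take_nthP [r /andP [hr1 hr2]] | /drop_nthP [r /andP [hr1 hr2]]] /eqP;
  rewrite nth_uniq ?hQL //; lia.
Qed.

Lemma offP x i : x \notin Q -> i < L -> 2 * i <= L -> e x (nth x0 Q i) -> False.
Proof.
move=> hx hi h2 hxy.
have hu := drop_uniq i hQu; have hs := drop_sorted i hQs.
have hu' : uniq (x :: drop i Q).
  rewrite /= hu andbT; apply: contra hx; exact: mem_drop.
have hp : path e x (drop i Q).
  by rewrite (drop_nth x0) ?hQL // in hs *; rewrite /= hxy.
have := tau_ge _ _ hu' hp; rewrite size_drop hQL => ht.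
apply: (contraA i x h2); last by lia.
apply/negP; rewrite mem_cat => /orP [/mem_take | /mem_drop]; apply/negP => //.
Qed.

Lemma chord i j : i.+2 <= j -> j < L -> i + j <= L.-1 ->
  e (nth x0 Q i) (nth x0 Q j) -> False.
Proof.
move=> hij hj hs hije.
set y := nth x0 Q i.
set D' := drop i.+1 Q.
set k := j - i.+1.
have hk : k.-1 < size D' by rewrite size_drop hQL; lia.
have hDi : drop i Q = y :: D' by rewrite (drop_nth x0) ?hQL //; lia.
have hdj : drop k D' = drop j Q by rewrite /D' drop_drop; congr drop; lia.
have hu : uniq (rev (take k D') ++ y :: drop j Q).
  have -> : uniq (rev (take k D') ++ y :: drop j Q) = uniq (take k D' ++ y :: drop j Q).
    by apply: perm_uniq; rewrite perm_cat2r perm_rev.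
  rewrite -cat1s uniq_catCA cat1s -hdj cat_take_drop -hDi.
  exact: drop_uniq.
have hsr : sorted e (rev (take k D') ++ y :: drop j Q).
  rewrite sorted_cat_cons -rev_cons; apply/andP; split.
    have := rev_ok _ (take_uniq k.+1 (drop_uniq i hQu)) (take_sorted k.+1 (drop_sorted i hQs)).
    by rewrite hDi /= => /andP [_ ->].
  have := drop_sorted j hQs; rewrite (drop_nth x0) ?hQL //= => ->.
  by rewrite andbT.
have ht : take k D' = rcons (take k.-1 D') (nth x0 D' k.-1).
  by rewrite -take_nth //; congr take; lia.
have hn : nth x0 D' k.-1 = nth x0 Q j.-1 by rewrite /D' nth_drop; congr nth; lia.
rewrite ht rev_rcons hn /= in hu hsr.
have := tau_ge _ _ hu hsr.
have hsz : k.-1 <= size D' by lia.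
rewrite size_cat size_rev /= (size_takel hsz) size_drop hQL => htw.
apply: (contraA i.+1 (nth x0 Q j.-1)); first by lia.
  by apply: notinA; lia.
lia.
Qed.

End C.
End S.

Theorem theorem1p10 (T : finType) (e : rel T) :
  simple_graph e -> connected_graph e -> ~ is_path_graph e ->
  exists k : nat, 3 <= #|[set v : T | tau e v == k]|.
Proof.
move=> [sym irr] [n0 conn] notp.
apply: NNPP => hno.
have hfib : forall k : nat, #|[set v | tau e v == k]| <= 2.
  by move=> k; rewrite leqNgt; apply/negP => h; apply: hno; exists k.
have /card_gt0P [v0 _] := n0.
have [vm htau] : exists vm, forall v, tau e v <= tau e vm.
  exists [arg max_(v > v0) tau e v].
  by case: arg_maxnP => // i _ H v; apply: H.
have [s [hu hp hsz]] := tau_path _ e vm.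
set L := tau e vm in htau hsz.
set P := vm :: s.
have hPu : uniq P by [].
have hPs : sorted e P by [].
have hPL : size P = L by rewrite /= hsz.
have hRu : uniq (rev P) by rewrite rev_uniq.
have hRs : sorted e (rev P) by case/andP: (rev_ok _ _ sym _ hPu hPs).
have hRL : size (rev P) = L by rewrite size_rev.
have [[x [y [hxy [hx hy]]]] | hcl] := classic (exists x y, e x y /\ x \notin P /\ y \in P).
  set i := index y P.
  have hi : i < L by rewrite -hPL index_mem.
  have hyi : y = nth vm P i by rewrite nth_index.
  have [h2 | h2] := leqP (2 * i) L.
    by apply: (@offP T e sym vm L P hPu hPs hPL htau hfib x i hx hi h2); rewrite -hyi.
  have hx' : x \notin rev P by rewrite mem_rev.
  have hi' : L - i.+1 < L by lia.
  have h2' : 2 * (L - i.+1) <= L by lia.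
  apply: (@offP T e sym vm L (rev P) hRu hRs hRL htau hfib x (L - i.+1) hx' hi' h2').
  rewrite nth_rev; last by rewrite hPL; lia.
  rewrite hPL.
  have -> : L - (L - i.+1).+1 = i by lia.
  by rewrite -hyi.
have hall : forall u, u \in P.
  move=> u; apply: NNPP => hu'.
  have hcP : closed e [predC P].
    apply: intro_closed; first exact: sym_connect_sym.
    move=> a b hab; rewrite !inE => ha; apply/negP => hb; apply: hcl.
    by exists a, b.
  move/negP: hu' => hu'. have := closed_connect hcP (conn u vm).
  rewrite !inE eqxx /=; move: hu'; rewrite inE => ->.
  by [].
have [[i [j [hij hj hije]]] | hch] := classic (exists i j, [/\ i.+2 <= j, j < L & e (nth vm P i) (nth vm P j)]).
  have [hs | hs] := leqP (i + j) L.-1.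
    exact: (@chord T e sym vm L P hPu hPs hPL htau hfib i j hij hj hs hije).
  apply: (@chord T e sym vm L (rev P) hRu hRs hRL htau hfib (L - j.+1) (L - i.+1)); try lia.
  rewrite !nth_rev ?hPL; try lia.
  have -> : L - (L - j.+1).+1 = j by lia.
  have -> : L - (L - i.+1).+1 = i by lia.
  by rewrite sym.
apply: notp; exists P; split => // x y.
set a := index x P; set b := index y P.
have ha : a < L by rewrite -hPL index_mem.
have hb : b < L by rewrite -hPL index_mem.
have -> : e x y = e (nth vm P a) (nth vm P b) by rewrite /a /b !nth_index.
apply/idP/idP.
  move=> hab.
  have [h|h] := leqP a.+2 b.
    by exfalso; apply: hch; exists a, b.
  have [h'|h'] := leqP b.+2 a.
    by exfalso; apply: hch; exists b, a; rewrite sym.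
  have : (a == b) || (b == a.+1) || (a == b.+1) by lia.
  case/orP => [/orP [/eqP h1 | /eqP ->] | /eqP ->]; rewrite ?eqxx ?orbT //.
  by rewrite h1 irr in hab.
have /(sortedP vm) hS := hPs.
case/orP => /eqP H; rewrite H.
  by apply: hS; rewrite hPL -H.
by rewrite sym; apply: hS; rewrite hPL -H.
Qed.
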